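(* In the setting below: (i) For every $x\in M$ there is $y\in M$ with $y\neq x$ and $y\subseteq x$. (ii) If $x$ is a basic magma, then there is no partition of $x$ into finitely many (at least two) pairwise disjoint nonempty elements of $M$; i.e. there are no $n\geq2$ and pairwise disjoint $y_1,\dots,y_n\in M$ with $x=y_1\cup\dots\cup y_n$. (iii) Every element of $V(A)$ that is not in $M$ is either a set or an atom.
   Context: Work in ZFA (ZF with a set $A$ of atoms, i.e. urelements that have no elements), extended by a primitive binary relation $\preccurlyeq$ on $A$, with Separation and Replacement holding for formulas mentioning $\preccurlyeq$. $A$ is an infinite set of atoms and $\preccurlyeq$ is a pre-ordering (reflexive, transitive) on $A$ with no minimal elements: for every $a\in A$ there is $b\in A$ with $b\preccurlyeq a$ and not $a\preccurlyeq b$. For $a\in A$, $pr(a)=\{b\in A:b\preccurlyeq a\}$; $LO(A,\preccurlyeq)$ is the set of nonempty $x\subseteq A$ with $pr(a)\subseteq x$ for all $a\in x$. For a set $X$ of sets, $LO(X,\subseteq)$ is the set of nonempty $x\subseteq X$ such that for every $y\in x$ and every $z\in X$ with $z\subseteq y$, $z\in x$. The magmatic hierarchy: $M_1=LO(A,\preccurlyeq)$; $M_{\alpha+1}=LO(M_\alpha,\subseteq)$ for $\alpha\geq1$; $M_\alpha=\bigcup_{1\leq\beta<\alpha}M_\beta$ for limit $\alpha$; $M=\bigcup_{\alpha\geq1}M_\alpha$; elements of $M$ are called magmas. A basic magma is a set of the form $pr(a)$ for $a\in A$, or of the form $pr_\alpha(x)=\{y\in M_\alpha:y\subseteq x\}$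 for some ordinal $\alpha\geq1$ and $x\in M_\alpha$. $V(A)$ is the ZFA universe over $A$: $V_0(A)=A$, $V_{\alpha+1}(A)=V_\alpha(A)\cup\mathcal{P}(V_\alpha(A))$, unions at limits, $V(A)=\bigcup_\alpha V_\alpha(A)$. *)

(* Defs.v *)
(* A concrete model of the ZFA universe V(A):
   Aczel-style well-founded trees with atoms, with extensional equality
   [eqV] and membership [mem]. *)
From Stdlib Require Import List.

Set Implicit Arguments.

Section ZFA.
Variable Atom : Type.

Inductive V : Type :=
| atom : Atom -> V
| node : forall I : Type, (I -> V) -> V.

Fixpoint eqV (x y : V) {struct x} : Prop :=
  match x, y with
  | atom a, atom b => a = b
  | node f, node g =>
      (forall i, exists j, eqV (f i) (g j)) /\
      (forall j, exists i, eqV (f i) (g j))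
  | _, _ => False
  end.

Definition mem (z x : V) : Prop :=
  match x with
  | atom _ => False
  | node f => exists i, eqV z (f i)
  end.

Definition is_atom (x : V) : Prop := exists a, eqV x (atom a).
Definition is_set (x : V) : Prop := exists (I : Type) (f : I -> V), eqV x (node f).

Definition sub (x y : V) : Prop := forall z, mem z x -> mem z y.

Variable prec : Atom -> Atom -> Prop.

Definition in_pr (a : Atom) (z : V) : Prop := exists b, eqV z (atom b) /\ prec b a.

Definition LO_A (x : V) : Prop :=
  is_set x /\ (exists z, mem z x) /\
  (forall z, mem z x -> is_atom z) /\
  (forall a, mem (atom a) x -> forall z, in_pr a z -> mem z x).

Definition LO (X : V -> Prop) (x : V) : Prop :=
  is_set x /\ (exists z, mem z x) /\
  (forall z, mem z x -> X z) /\
  (forall y z, mem y x -> X z -> sub z y -> mem z x).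

(* Ordinals >= 1 are represented by well-ordered index types with a least
   element (the least element plays the role of the ordinal 1). *)
Record is_wellorder (T : Type) (lt : T -> T -> Prop) (t0 : T) : Prop := {
  wo_wf : well_founded lt;
  wo_trans : forall r s t, lt r s -> lt s t -> lt r t;
  wo_total : forall s t, lt s t \/ s = t \/ lt t s;
  wo_least : forall t, t = t0 \/ lt t0 t
}.

(* The magmatic hierarchy indexed by such a well-order:
   F t0 = M_1, F (succ s) = LO(F s, ⊆), F t = union of earlier F s at limits. *)
Definition is_magmatic (T : Type) (lt : T -> T -> Prop) (t0 : T)
  (F : T -> V -> Prop) : Prop :=
  (forall x, F t0 x <-> LO_A x) /\
  (forall s t, lt s t -> (forall u, ~ (lt s u /\ lt u t)) ->
     forall x, F t x <-> LO (F s) x) /\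
  (forall t, t <> t0 -> (forall s, lt s t -> exists u, lt s u /\ lt u t) ->
     forall x, F t x <-> exists s, lt s t /\ F s x).

Definition inM (x : V) : Prop :=
  exists (T : Type) (lt : T -> T -> Prop) (t0 : T) (F : T -> V -> Prop),
    is_wellorder lt t0 /\ is_magmatic lt t0 F /\ exists t, F t x.

Definition basic (x : V) : Prop :=
  (exists a, forall z, mem z x <-> in_pr a z) \/
  (exists (T : Type) (lt : T -> T -> Prop) (t0 : T) (F : T -> V -> Prop),
     is_wellorder lt t0 /\ is_magmatic lt t0 F /\
     exists t y, F t y /\ forall z, mem z x <-> (F t z /\ sub z y)).

End ZFA.

(* Main.v *)
Require Import Defs.
From Stdlib Require Import List Classical Lia.

Lemma eqV_refl {Atom : Type} (x : V Atom) : eqV x x.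
Proof.
  induction x as [a|I f IH]; simpl; auto.
  split; intro i; exists i; auto.
Qed.

Lemma eqV_sym {Atom : Type} : forall x y : V Atom, eqV x y -> eqV y x.
Proof.
  induction x as [a|I f IH]; destruct y as [b|J g]; simpl; try tauto.
  - intros; subst; auto.
  - intros [H1 H2]; split.
    + intro j; destruct (H2 j) as [i Hi]; exists i; apply IH; auto.
    + intro i; destruct (H1 i) as [j Hj]; exists j; apply IH; auto.
Qed.

Lemma eqV_trans {Atom : Type} : forall x y z : V Atom, eqV x y -> eqV y z -> eqV x z.
Proof.
  induction x as [a|I f IH]; destruct y as [b|J g]; destruct z as [c|K h];
    simpl; try tauto.
  - intros; congruence.
  - intros [H1 H2] [K1 K2]; split.
    + intro i; destruct (H1 i) as [j Hj]; destruct (K1 j) as [k Hk];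
        exists k; eauto.
    + intro k; destruct (K2 k) as [j Hj]; destruct (H2 j) as [i Hi];
        exists i; eauto.
Qed.

Lemma mem_r {Atom : Type} (x x' z : V Atom) : eqV x x' -> mem z x -> mem z x'.
Proof.
  destruct x as [a|I f]; destruct x' as [b|J g]; simpl; try tauto.
  intros [H1 H2] [i Hi]. destruct (H1 i) as [j Hj]. exists j.
  eapply eqV_trans; eauto.
Qed.

Lemma mem_l {Atom : Type} (x z z' : V Atom) : eqV z z' -> mem z x -> mem z' x.
Proof.
  destruct x as [a|I f]; simpl; auto.
  intros E [i Hi]; exists i. eapply eqV_trans; [apply eqV_sym; eauto| eauto].
Qed.

Lemma sub_inv {Atom : Type} (a b : V Atom) : eqV a b -> sub a b.
Proof. intros E z Hz; eapply mem_r; eauto. Qed.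

Lemma is_set_inv {Atom : Type} (x x' : V Atom) : is_set x -> eqV x x' -> is_set x'.
Proof.
  intros [I [f H]] E. exists I, f. eapply eqV_trans; [apply eqV_sym; eauto|eauto].
Qed.

Lemma is_set_node {Atom : Type} (x : V Atom) : is_set x -> exists I (f : I -> V Atom), x = node f.
Proof.
  destruct x as [a|I f]; [intros [J [g H]]; simpl in H; contradiction| eauto].
Qed.

Lemma atom_not_set {Atom : Type} (w : V Atom) : is_atom w -> is_set w -> False.
Proof.
  intros [a Ha] [I [f Hf]].
  pose proof (eqV_trans _ _ _ (eqV_sym _ _ Ha) Hf). simpl in H. exact H.
Qed.

Lemma ext {Atom : Type} (a b : V Atom) : is_set a -> is_set b -> sub a b -> sub b a -> eqV a b.
Proof.
  intros Ha Hb S1 S2.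
  destruct (is_set_node _ Ha) as [I [f ->]].
  destruct (is_set_node _ Hb) as [J [g ->]].
  simpl; split.
  - intro i. destruct (S1 (f i) (ex_intro _ i (eqV_refl _))) as [j Hj]. eauto.
  - intro j. destruct (S2 (g j) (ex_intro _ j (eqV_refl _))) as [i Hi].
    exists i; apply eqV_sym; auto.
Qed.

Lemma LO_A_inv {Atom : Type} prec (x x' : V Atom) : LO_A prec x -> eqV x x' -> LO_A prec x'.
Proof.
  intros [Hs [[z Hz] [Ha Hd]]] E.
  assert (E' := eqV_sym _ _ E).
  split; [eapply is_set_inv; eauto|split; [exists z; eapply mem_r; eauto|split]].
  - intros w Hw; apply Ha; eapply mem_r; eauto.
  - intros a Hma w Hw. eapply mem_r; eauto. eapply Hd; eauto. eapply mem_r; eauto.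
Qed.

Lemma LO_inv {Atom : Type} (X : V Atom -> Prop) (x x' : V Atom) : LO X x -> eqV x x' -> LO X x'.
Proof.
  intros [Hs [[z Hz] [Ha Hd]]] E.
  assert (E' := eqV_sym _ _ E).
  split; [eapply is_set_inv; eauto|split; [exists z; eapply mem_r; eauto|split]].
  - intros w Hw; apply Ha; eapply mem_r; eauto.
  - intros y w Hy Xw Sw. apply (mem_r _ _ _ E). apply (Hd y w); auto. apply (mem_r _ _ _ E'); auto.
Qed.

Lemma classify {T : Type} (lt : T -> T -> Prop) t0 t :
  t = t0 \/ (exists s, lt s t /\ forall u, ~ (lt s u /\ lt u t)) \/
  (t <> t0 /\ forall s, lt s t -> exists u, lt s u /\ lt u t).
Proof.
  destruct (classic (t = t0)) as [H|H]; [left; auto|right].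
  destruct (classic (exists s, lt s t /\ forall u, ~ (lt s u /\ lt u t))) as [H0|H0];
    [left; auto|right].
  split; auto. intros s Hs. apply NNPP; intro Hn. apply H0. exists s; split; auto.
  intros u Hu. apply Hn. exists u; auto.
Qed.


Lemma F_set_ne {Atom : Type} {prec} {T : Type} {lt} {t0 : T} {F : T -> V Atom -> Prop}
  (HW : is_wellorder lt t0) (HM : is_magmatic prec lt t0 F) :
  forall t x, F t x -> is_set x /\ exists z, mem z x.
Proof.
  destruct HM as [H0 [HS HL]].
  intro t; induction t as [t IH] using (well_founded_ind (wo_wf HW)).
  intros x Hx.
  destruct (classify lt t0 t) as [->|[[s [Hs Hi]]|[Hne Hlim]]].
  - apply H0 in Hx. destruct Hx as [? [? _]]; auto.
  - apply (HS s t Hs Hi) in Hx. destruct Hx as [? [? _]]; auto.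
  - apply (HL t Hne Hlim) in Hx. destruct Hx as [s [Hs Hx]]. eauto.
Qed.

Lemma F_inv {Atom : Type} {prec} {T : Type} {lt} {t0 : T} {F : T -> V Atom -> Prop}
  (HW : is_wellorder lt t0) (HM : is_magmatic prec lt t0 F) :
  forall t x x', F t x -> eqV x x' -> F t x'.
Proof.
  destruct HM as [H0 [HS HL]].
  intro t; induction t as [t IH] using (well_founded_ind (wo_wf HW)).
  intros x x' Hx E.
  destruct (classify lt t0 t) as [->|[[s [Hs Hi]]|[Hne Hlim]]].
  - apply H0 in Hx. apply H0. eapply LO_A_inv; eauto.
  - apply (HS s t Hs Hi) in Hx. apply (HS s t Hs Hi). eapply LO_inv; eauto.
  - apply (HL t Hne Hlim) in Hx. apply (HL t Hne Hlim).
    destruct Hx as [s [Hs Hx]]. eauto.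
Qed.

Lemma reduce {Atom : Type} {prec} {T : Type} {lt} {t0 : T} {F : T -> V Atom -> Prop}
  (HW : is_wellorder lt t0) (HM : is_magmatic prec lt t0 F) :
  forall t x, F t x -> exists t', F t' x /\
    (t' = t0 \/ exists s, lt s t' /\ forall u, ~ (lt s u /\ lt u t')).
Proof.
  destruct HM as [H0 [HS HL]].
  intro t; induction t as [t IH] using (well_founded_ind (wo_wf HW)).
  intros x Hx.
  destruct (classify lt t0 t) as [->|[[s [Hs Hi]]|[Hne Hlim]]].
  - exists t0; auto.
  - exists t; split; auto. right; eauto.
  - apply (HL t Hne Hlim) in Hx. destruct Hx as [s [Hs Hx]]. eauto.
Qed.

Lemma atomlevel {Atom : Type} {prec} {T : Type} {lt} {t0 : T} {F : T -> V Atom -> Prop}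
  (HW : is_wellorder lt t0) (HM : is_magmatic prec lt t0 F) :
  forall t y a, F t y -> mem (atom a) y -> LO_A prec y.
Proof.
  pose proof HM as [H0 [HS HL]].
  intro t; induction t as [t IH] using (well_founded_ind (wo_wf HW)).
  intros y a Hy Ha.
  destruct (classify lt t0 t) as [->|[[s [Hs Hi]]|[Hne Hlim]]].
  - apply H0; auto.
  - apply (HS s t Hs Hi) in Hy. destruct Hy as [_ [_ [HX _]]].
    apply HX in Ha. destruct (F_set_ne HW HM _ _ Ha) as [[I [f E]] _].
    simpl in E. contradiction.
  - apply (HL t Hne Hlim) in Hy. destruct Hy as [s [Hs Hy]]. eauto.
Qed.

Lemma key {Atom : Type} prec : forall y : V Atom,
  forall (T : Type) lt (t0 : T) (F : T -> V Atom -> Prop),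
  is_wellorder lt t0 -> is_magmatic prec lt t0 F ->
  forall t, F t y ->
  forall (T' : Type) lt' (t0' : T') (F' : T' -> V Atom -> Prop),
  is_wellorder lt' t0' -> is_magmatic prec lt' t0' F' ->
  forall t' z, F' t' z -> sub z y -> F t z.
Proof.
  intro y; induction y as [a|I f IHf].
  { intros T lt t0 F HW HM t Hy.
    destruct (F_set_ne HW HM _ _ Hy) as [[I [f E]] _]. simpl in E. contradiction. }
  intros T lt t0 F HW HM t.
  induction t as [t IHt] using (well_founded_ind (wo_wf HW)).
  intros Hy T' lt' t0' F' HW' HM' t' z Hz Hsub.
  pose proof HM as [H0 [HS HL]].
  pose proof HM' as [H0' [HS' HL']].
  destruct (F_set_ne HW' HM' _ _ Hz) as [Hzs [w Hw]].
  destruct (classify lt t0 t) as [->|[[s [Hs Hi]]|[Hne Hlim]]].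
  - apply H0 in Hy. apply H0.
    destruct Hy as [_ [_ [Ha _]]].
    destruct (Ha w (Hsub w Hw)) as [a Hwa].
    eapply (atomlevel HW' HM' t' z a Hz). eapply mem_l; eauto.
  - apply (HS s t Hs Hi) in Hy. apply (HS s t Hs Hi).
    destruct Hy as [_ [_ [HyX HyD]]].
    split; [auto|split; [eauto|split]].
    + intros u Hu; apply HyX, Hsub, Hu.
    + intros w' u Hw' Hu Hsu.
      destruct (reduce HW' HM' t' z Hz) as [t'' [Hz'' [Hc|[s'' [Hs'' Hi'']]]]].
      * subst t''. apply H0' in Hz''. destruct Hz'' as [_ [_ [Za _]]].
        exfalso. apply (atom_not_set w'); auto.
        apply (F_set_ne HW HM s); auto.
      * apply (HS' s'' t'' Hs'' Hi'') in Hz''.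
        destruct Hz'' as [_ [_ [ZX ZD]]].
        apply ZD with w'; auto.
        destruct (Hsub w' Hw') as [i Hwi].
        apply (IHf i T' lt' t0' F' HW' HM' s'' (F_inv HW' HM' _ _ _ (ZX w' Hw') Hwi)
                 T lt t0 F HW HM s u Hu).
        intros v Hv. apply (sub_inv _ _ Hwi). auto.
  - apply (HL t Hne Hlim) in Hy. apply (HL t Hne Hlim).
    destruct Hy as [s [Hs Hy]]. exists s; split; auto.
    eapply IHt; eauto.
Qed.

Lemma part1 {Atom : Type} {prec}
  (prec_refl : forall a, prec a a)
  (prec_trans : forall a b c, prec a b -> prec b c -> prec a c)
  (no_minimal : forall a, exists b, prec b a /\ ~ prec a b)
  {T : Type} {lt} {t0 : T} {F : T -> V Atom -> Prop}
  (HW : is_wellorder lt t0) (HM : is_magmatic prec lt t0 F) :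
  forall t (x : V Atom), F t x -> exists y, F t y /\ ~ eqV y x /\ sub y x.
Proof.
  pose proof HM as [H0 [HS HL]].
  intro t; induction t as [t IH] using (well_founded_ind (wo_wf HW)).
  intros x Hx.
  destruct (F_set_ne HW HM _ _ Hx) as [Hxs _].
  destruct (is_set_node _ Hxs) as [I [f ->]].
  destruct (classify lt t0 t) as [->|[[s [Hs Hi]]|[Hne Hlim]]].
  - apply H0 in Hx. destruct Hx as [_ [[z Hz] [Ha Hd]]].
    destruct (Ha z Hz) as [a Haz].
    destruct (no_minimal a) as [b [Hba Hab]].
    assert (Hma : mem (atom a) (node f)) by (eapply mem_l; eauto).
    exists (node (fun j : {i : I | in_pr prec b (f i)} => f (proj1_sig j))).
    split; [apply H0|split].
    + split; [eexists; eexists; apply eqV_refl|split;[|split]].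
      * assert (Hmb : mem (atom b) (node f)).
        { apply (Hd a Hma). exists b; split; [apply eqV_refl|auto]. }
        destruct Hmb as [i Hi].
        assert (P : in_pr prec b (f i)).
        { exists b; split; [apply eqV_sym; auto|auto]. }
        exists (atom b), (exist _ i P). simpl. auto.
      * intros w [[i P] Hw]. apply Ha. exists i. auto.
      * intros c [[i P] Hc] w [d [Hwd Hdc]].
        destruct P as [e [He Hpe]].
        pose proof (eqV_trans _ _ _ Hc He) as Ece. simpl in Ece. subst e.
        assert (Hmw : mem w (node f)).
        { apply (Hd c). exists i; auto. exists d; auto. }
        destruct Hmw as [k Hk].
        assert (P : in_pr prec b (f k)).
        { exists d; split; [eapply eqV_trans; [apply eqV_sym; eauto|eauto]|eauto]. }
        exists (exist _ k P). simpl. auto.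
    + intro E. pose proof (mem_r _ _ _ (eqV_sym _ _ E) Hma) as [[i P] Hi].
      destruct P as [e [He Hpe]].
      pose proof (eqV_trans _ _ _ Hi He) as Ece. simpl in Ece. subst e. auto.
    + intros w [[i P] Hw]. exists i; auto.
  - apply (HS s t Hs Hi) in Hx. destruct Hx as [_ [[y Hy] [HX HD]]].
    destruct (IH s Hs y (HX y Hy)) as [y' [Fy' [Ny' Sy']]].
    exists (node (fun j : {i : I | sub (f i) y'} => f (proj1_sig j))).
    split; [apply (HS s t Hs Hi)|split].
    + split; [eexists; eexists; apply eqV_refl|split;[|split]].
      * destruct (HD y y' Hy Fy' Sy') as [i Hi'].
        assert (P : sub (f i) y') by (apply sub_inv, eqV_sym; auto).
        exists y', (exist _ i P). simpl. auto.
      * intros w [[i P] Hw]. apply HX. exists i. auto.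
      * intros w u [[i P] Hw] Fu Hsu.
        destruct (HD w u (ex_intro _ i Hw) Fu Hsu) as [k Hk].
        assert (P' : sub (f k) y').
        { intros v Hv. apply P. apply (sub_inv _ _ Hw). apply Hsu.
          apply (sub_inv _ _ (eqV_sym _ _ Hk)). auto. }
        exists (exist _ k P'). simpl. auto.
    + intro E. pose proof (mem_r _ _ _ (eqV_sym _ _ E) Hy) as [[i P] Hi'].
      simpl in Hi'. apply Ny'. apply ext.
      * apply (F_set_ne HW HM s); auto.
      * apply (F_set_ne HW HM s); auto.
      * auto.
      * intros v Hv. apply P. apply (sub_inv _ _ Hi'). auto.
    + intros w [[i P] Hw]. exists i; auto.
  - apply (HL t Hne Hlim) in Hx. destruct Hx as [s [Hs Hx]].
    destruct (IH s Hs _ Hx) as [y [Fy R]]. exists y; split; auto.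
    apply (HL t Hne Hlim). eauto.
Qed.

Lemma inM_ne {Atom : Type} prec (y : V Atom) : inM prec y -> exists z, mem z y.
Proof.
  intros [T [lt [t0 [F [HW [HM [t Ht]]]]]]].
  apply (F_set_ne HW HM t); auto.
Qed.

Theorem proposition4p14 (Atom : Type) (prec : Atom -> Atom -> Prop)
  (A_infinite : ~ exists l : list Atom, forall a, In a l)
  (prec_refl : forall a, prec a a)
  (prec_trans : forall a b c, prec a b -> prec b c -> prec a c)
  (no_minimal : forall a, exists b, prec b a /\ ~ prec a b) :
  (* (i) *)
  (forall x : V Atom, inM prec x ->
     exists y, inM prec y /\ ~ eqV y x /\ sub y x) /\
  (* (ii) *)
  (forall x : V Atom, basic prec x ->
     ~ exists (n : nat) (y : nat -> V Atom),
         2 <= n /\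
         (forall i, i < n -> inM prec (y i)) /\
         (forall i j, i < n -> j < n -> i <> j ->
            forall z, ~ (mem z (y i) /\ mem z (y j))) /\
         (forall z, mem z x <-> exists i, i < n /\ mem z (y i))) /\
  (* (iii) *)
  (forall x : V Atom, ~ inM prec x -> is_set x \/ is_atom x).
Proof.
  split; [|split].
  - intros x [T [lt [t0 [F [HW [HM [t Ht]]]]]]].
    destruct (part1 prec_refl prec_trans no_minimal HW HM t x Ht) as [y [Fy R]].
    exists y; split; auto. exists T, lt, t0, F; split; auto; split; eauto.
  - intros x Hb [n [y [Hn [HyM [Hdis Hx]]]]].
    assert (Fin : forall i, i < n -> sub x (y i) -> False).
    { intros i Hi Hs.
      set (j := if PeanoNat.Nat.eq_dec i 0 then 1 else 0).
      assert (Hj : j < n /\ j <> i) by (unfold j; destruct (PeanoNat.Nat.eq_dec i 0); lia).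
      destruct (inM_ne _ _ (HyM j (proj1 Hj))) as [w Hw].
      apply (Hdis i j Hi (proj1 Hj) (not_eq_sym (proj2 Hj)) w). split; auto.
      apply Hs. apply Hx. exists j; split; auto. apply Hj. }
    destruct Hb as [[a Ha]|[T [lt [t0 [F [HW [HM [t [y0 [Hy0 Hx0]]]]]]]]]].
    + assert (Hma : mem (atom a) x).
      { apply Ha. exists a; split; [apply eqV_refl|auto]. }
      apply Hx in Hma. destruct Hma as [i [Hi Hmi]].
      apply (Fin i Hi).
      destruct (HyM i Hi) as [T [lt [t0 [F [HW [HM [t Ht]]]]]]].
      destruct (atomlevel HW HM t (y i) a Ht Hmi) as [_ [_ [_ Hd]]].
      intros z Hz. apply Ha in Hz. eapply Hd; eauto.
    + assert (Hm0 : mem y0 x).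
      { apply Hx0. split; auto. intros w; auto. }
      apply Hx in Hm0. destruct Hm0 as [i [Hi Hmi]].
      apply (Fin i Hi).
      destruct (HyM i Hi) as [T' [lt' [t0' [F' [HW' [HM' [t' Ht']]]]]]].
      pose proof HM' as [H0' [HS' HL']].
      destruct (reduce HW' HM' t' (y i) Ht') as [t'' [Hy'' [Hc|[s'' [Hs'' Hi'']]]]].
      * subst t''. apply H0' in Hy''. destruct Hy'' as [_ [_ [Za _]]].
        exfalso. apply (atom_not_set y0); auto.
        apply (F_set_ne HW HM t); auto.
      * apply (HS' s'' t'' Hs'' Hi'') in Hy''.
        destruct Hy'' as [_ [_ [YX YD]]].
        intros z Hz. apply Hx0 in Hz. destruct Hz as [Fz Sz].
        apply YD with y0; auto.
        apply (key _ y0 _ _ _ _ HW' HM' s'' (YX y0 Hmi) _ _ _ _ HW HM t z Fz Sz).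
  - intros x _. destruct x as [a|I f].
    + right. exists a. apply eqV_refl.
    + left. exists I, f. apply eqV_refl.
Qed.
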